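(* Assume Assumption A. Then the family of sequences $(\mu_N(\eta))_{N\ge1}$, $\eta\in E$, is ordered.
   Context: Setting: $E$ is a fixed finite set; for each $N\ge1$, $(\eta^N_t)$ is a continuous-time irreducible Markov chain on $E$ with jump rates $R_N(\eta,\xi)$ and unique invariant probability measure $\mu_N$. Ordered families: a finite family of sequences of positive reals $(a^r_N)_{N\ge1}$, $r\in\mathfrak R$, is ordered if for all $r\neq s$ the sequence $\arctan(a^r_N/a^s_N)$ converges as $N\to\infty$. Assumption A: (i) for each $\eta\neq\xi$, either $R_N(\eta,\xi)=0$ for all $N$ or $R_N(\eta,\xi)>0$ for all $N$; let $\mathbb B=\{(\eta,\xi):\eta\ne\xi,R_N(\eta,\xi)>0\}$. (ii) For every $m\ge1$ the family $\prod_{(\eta,\xi)\in\mathbb B}R_N(\eta,\xi)^{k(\eta,\xi)}$, indexed by $k:\mathbb B\to\mathbb Z_+$ with $\sum k=m$, is ordered. *)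

(* Defs.v *)
From mathcomp Require Import all_boot.
From Stdlib Require Import Reals.

Set Implicit Arguments.
Unset Strict Implicit.
Unset Printing Implicit Defensive.

(* Sequences are indexed by nat; only indices N >= 1 are meaningful. *)

Definition ordered_family (I : Type) (a : I -> nat -> R) : Prop :=
  (forall r N, (1 <= N)%nat -> (0 < a r N)%R) /\
  (forall r s, r <> s ->
     exists l : R, Un_cv (fun N => atan (a r N / a s N)) l).

Inductive reach (E : finType) (Rt : E -> E -> R) : E -> E -> Prop :=
  | reach_refl x : reach Rt x x
  | reach_step x y z : x <> y -> (0 < Rt x y)%R -> reach Rt y z -> reach Rt x z.

Definition irreducible (E : finType) (Rt : E -> E -> R) : Prop :=
  forall x y : E, reach Rt x y.

Definition invariant_prob (E : finType) (Rt : E -> E -> R) (mu : E -> R) : Prop :=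
  (forall x, (0 <= mu x)%R) /\
  \big[Rplus/0%R]_(x : E) mu x = 1%R /\
  (forall xi : E,
     \big[Rplus/0%R]_(eta : E | eta != xi) (mu eta * Rt eta xi)%R =
     (mu xi * \big[Rplus/0%R]_(zeta : E | zeta != xi) Rt xi zeta)%R).

(* The edge set B = {(eta,xi) : eta <> xi, R_N(eta,xi) > 0} (well defined
   under Assumption A(i); we read it at N = 1). *)
Definition inB (E : finType) (Rn : nat -> E -> E -> R) (x y : E) : Prop :=
  x <> y /\ (0 < Rn 1%nat x y)%R.

(* Exponent vectors k : B -> Z_+ with sum k = m, encoded as functions
   E -> E -> nat vanishing outside B. *)
Definition exps (E : finType) (Rn : nat -> E -> E -> R) (m : nat) : Type :=
  { k : E -> E -> nat |
      (forall x y, k x y <> 0%nat -> inB Rn x y) /\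
      \big[addn/0%nat]_(p : E * E | p.1 != p.2) k p.1 p.2 = m }.

Definition rate_monomial (E : finType) (Rn : nat -> E -> E -> R) (m : nat)
    (k : exps Rn m) (N : nat) : R :=
  \big[Rmult/1%R]_(p : E * E | p.1 != p.2) pow (Rn N p.1 p.2) (proj1_sig k p.1 p.2).

Definition assumptionA (E : finType) (Rn : nat -> E -> E -> R) : Prop :=
  (forall x y : E, x <> y ->
     (forall N, (1 <= N)%nat -> Rn N x y = 0%R) \/
     (forall N, (1 <= N)%nat -> (0 < Rn N x y)%R)) /\
  (forall m : nat, (1 <= m)%nat -> ordered_family (@rate_monomial E Rn m)).

(* Main.v *)
Require Import Defs.
From mathcomp Require Import all_boot.
From Stdlib Require Import Reals.
From HB Require Import structures.
From Stdlib Require Import Lra Classical.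
From Stdlib Require List.

Section Analysis.
Local Open Scope R_scope.

Definition posq (a : nat -> R) := forall N, (1 <= N)%nat -> 0 < a N.
Definition dom (a b : nat -> R) := exists L, Un_cv (fun N => a N / b N) L.

Lemma Un_cv_tail (u v : nat -> R) l :
  (forall N, (1 <= N)%nat -> u N = v N) -> Un_cv u l -> Un_cv v l.
Proof.
move=> H Hu eps Heps; have [N0 HN0] := Hu eps Heps.
exists N0.+1 => n Hn; rewrite -H; first by apply: HN0; apply/leP; apply: (leq_trans (leqnSn _)); apply/leP.
by apply: leq_trans (ltn0Sn N0) _; apply/leP.
Qed.

Lemma Un_cv_const c : Un_cv (fun _ => c) c.
Proof. move=> eps He; exists 0%nat => n _; rewrite /Rdist Rminus_diag Rabs_R0; lra. Qed.

Lemma cv_ge_tail (u : nat -> R) l c :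
  (forall N, (1 <= N)%nat -> c <= u N) -> Un_cv u l -> c <= l.
Proof.
move=> H Hu.
pose v N := match N with 0%nat => u 1%nat | _ => u N end.
have Hv : Un_cv v l by apply: Un_cv_tail Hu => -[|N].
apply: (Rle_cv_lim (Un := fun _ => c) (Vn := v)) Hv => //; last exact: Un_cv_const.
by case=> [|N] /=; apply: H.
Qed.

Lemma cv_le_tail (u : nat -> R) l c :
  (forall N, (1 <= N)%nat -> u N <= c) -> Un_cv u l -> l <= c.
Proof.
move=> H Hu.
pose v N := match N with 0%nat => u 1%nat | _ => u N end.
have Hv : Un_cv v l by apply: Un_cv_tail Hu => -[|N].
apply: (Rle_cv_lim (Un := v) (Vn := fun _ => c)) Hv _ => //; last exact: Un_cv_const.
by case=> [|N] /=; apply: H.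
Qed.

Lemma cont_atan x : continuity_pt atan x.
Proof. apply: derivable_continuous_pt; apply: derivable_pt_atan. Qed.

Lemma cv_inv (u : nat -> R) l : l <> 0 -> Un_cv u l -> Un_cv (fun N => / u N) (/ l).
Proof.
move=> Hl Hu.
have Hc : continuity_pt (/ (fun x => x))%F l.
  apply: continuity_pt_inv => //; apply: derivable_continuous_pt; apply: derivable_pt_id.
exact: (continuity_seq _ _ _ Hc Hu).
Qed.

Lemma cv_tan (u : nat -> R) l : - PI / 2 < l < PI / 2 -> Un_cv u l ->
  Un_cv (fun N => tan (u N)) (tan l).
Proof.
move=> Hl Hu; apply: continuity_seq Hu; apply: derivable_continuous_pt.
exact: derivable_pt_tan.
Qed.

Lemma ordered_dom (a b : nat -> R) : posq a -> posq b ->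
  (exists l, Un_cv (fun N => atan (a N / b N)) l) -> dom a b \/ dom b a.
Proof.
move=> Ha Hb [l Hl].
have Hpos N : (1 <= N)%nat -> 0 < a N / b N.
  move=> HN; apply: Rdiv_lt_0_compat; [exact: Ha | exact: Hb].
have l0 : 0 <= l.
  apply: cv_ge_tail Hl => N HN; rewrite -atan_0; apply: Rlt_le; apply: atan_increasing; exact: Hpos.
have lP : l <= PI / 2.
  apply: cv_le_tail Hl => N _; have := atan_bound (a N / b N); lra.
have PI0 := PI_RGT_0.
case: (Rlt_le_dec l (PI / 2)) => Hlt.
  left; exists (tan l).
  have Hr : - PI / 2 < l < PI / 2 by lra.
  have H := cv_tan _ _ Hr Hl.
  by apply: Un_cv_tail H => N _; rewrite tan_atan.
right; exists (tan 0).
have H1 : Un_cv (fun N => atan (b N / a N)) 0.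
  have Hc : Un_cv (fun N => PI / 2 - atan (a N / b N)) (PI/2 - l).
    have := CV_minus _ _ _ _ (Un_cv_const (PI / 2)) Hl; by [].
  have -> : 0 = PI / 2 - l by lra.
  apply: Un_cv_tail Hc => N HN.
  have Ha' := Ha N HN; have Hb' := Hb N HN.
  rewrite -atan_inv; last exact: Hpos.
  congr atan; field; lra.
have Hr : - PI / 2 < 0 < PI / 2 by lra.
have := cv_tan _ _ Hr H1.
by apply: Un_cv_tail => N _; rewrite tan_atan.
Qed.

Lemma dom_trans a b c : posq b -> dom a b -> dom b c -> dom a c.
Proof.
move=> Hb [L1 H1] [L2 H2]; exists (L1 * L2).
have := CV_mult _ _ _ _ H1 H2; apply: Un_cv_tail => N HN.
have := Hb N HN => ?; rewrite /Rdiv Rmult_assoc -(Rmult_assoc (/ b N)) Rinv_l; lra.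
Qed.

Lemma dom_refl a : posq a -> dom a a.
Proof.
move=> Ha; exists 1; have := Un_cv_const 1; apply: Un_cv_tail => N HN.
by rewrite /Rdiv Rinv_r //; have := Ha N HN; lra.
Qed.

Fixpoint sumL (fs : seq (nat -> R)) N : R :=
  match fs with [::] => 0 | f :: fs => f N + sumL fs N end.

Lemma sumL_cat fs gs N : sumL (fs ++ gs) N = sumL fs N + sumL gs N.
Proof. elim: fs => [|f fs IH] /=; rewrite ?IH; lra. Qed.

Lemma sumL_ge0 fs N : (forall f, List.In f fs -> 0 < f N) -> 0 <= sumL fs N.
Proof.
elim: fs => [|f fs IH] /= H; first lra.
have := H f (or_introl erefl); have := IH (fun g Hg => H g (or_intror Hg)); lra.
Qed.

Lemma sumL_ge fs d N : List.In d fs -> (forall f, List.In f fs -> 0 < f N) -> d N <= sumL fs N.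
Proof.
elim: fs => [|f fs IH] //= Hd H.
have Hf := H f (or_introl erefl); have Hs := sumL_ge0 fs N (fun g Hg => H g (or_intror Hg)).
case: Hd => [<-|Hd]; first lra.
have := IH Hd (fun g Hg => H g (or_intror Hg)); lra.
Qed.

Lemma max_elem (L : seq (nat -> R)) : L <> [::] ->
  (forall f, List.In f L -> posq f) ->
  (forall f g, List.In f L -> List.In g L -> dom f g \/ dom g f) ->
  exists d, List.In d L /\ forall f, List.In f L -> dom f d.
Proof.
elim: L => [|x L IH] // _ Hp Ht.
case: L IH Hp Ht => [|y L] IH Hp Ht.
  exists x; split; first by left.
  by move=> f [<-|[]]; apply: dom_refl; apply: Hp; left.
have [d [Hd Hdom]] : exists d, List.In d (y :: L) /\ forall f, List.In f (y :: L) -> dom f d.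
  apply: IH => // [f Hf|f g Hf Hg]; [apply: Hp|apply: Ht]; by right.
case: (Ht x d (or_introl erefl) (or_intror Hd)) => Hxd.
  exists d; split; first by right.
  by move=> f [<-|Hf] //; apply: Hdom.
exists x; split; first by left.
move=> f [<-|Hf]; first by apply: dom_refl; apply: Hp; left.
apply: dom_trans (Hdom f Hf) Hxd; apply: Hp; by right.
Qed.

Lemma sum_dom fs d : (forall f, List.In f fs -> dom f d) ->
  exists L, Un_cv (fun N => sumL fs N / d N) L.
Proof.
elim: fs => [|f fs IH] /= H.
  exists 0; have := Un_cv_const 0; apply: Un_cv_tail => N _; rewrite /Rdiv Rmult_0_l //.
have [L1 H1] := H f (or_introl erefl).
have [L2 H2] := IH (fun g Hg => H g (or_intror Hg)).
exists (L1 + L2); have := CV_plus _ _ _ _ H1 H2; apply: Un_cv_tail => N _.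
by rewrite /Rdiv Rmult_plus_distr_r.
Qed.

Lemma ratio_atan fs gs :
  (forall f, List.In f (fs ++ gs) -> posq f) ->
  (forall f g, List.In f (fs ++ gs) -> List.In g (fs ++ gs) -> dom f g \/ dom g f) ->
  posq (sumL fs) -> posq (sumL gs) ->
  exists l, Un_cv (fun N => atan (sumL fs N / sumL gs N)) l.
Proof.
move=> Hp Ht Hf Hg.
have Hne : fs ++ gs <> [::].
  case: fs {Hp Ht} Hf => [|? ?] //= Hf; have := Hf 1%nat (leqnn _) => /=; lra.
have [d [Hd Hdom]] := max_elem _ Hne Hp Ht.
have [Lf HLf] := sum_dom _ _ (fun f Hf => Hdom f (List.in_or_app _ _ _ (or_introl Hf))).
have [Lg HLg] := sum_dom _ _ (fun f Hf => Hdom f (List.in_or_app _ _ _ (or_intror Hf))).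
have Hpd := Hp d Hd.
have Hin N : (1 <= N)%nat -> forall f, List.In f (fs ++ gs) -> 0 < f N.
  by move=> HN f Hf'; apply: Hp.
have Lf0 : 0 <= Lf.
  apply: cv_ge_tail HLf => N HN; have := Hf N HN; have := Hpd N HN => *.
  apply: Rlt_le; apply: Rdiv_lt_0_compat => //.
have Lg0 : 0 <= Lg.
  apply: cv_ge_tail HLg => N HN; have := Hg N HN; have := Hpd N HN => *.
  apply: Rlt_le; apply: Rdiv_lt_0_compat => //.
have L1 : 1 <= Lf + Lg.
  have := CV_plus _ _ _ _ HLf HLg => H.
  apply: cv_ge_tail H => N HN.
  have := sumL_ge _ _ _ Hd (Hin N HN); rewrite sumL_cat => H.
  have := Hpd N HN => ?.
  rewrite -Rmult_plus_distr_r -(Rinv_r (d N)); last lra.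
  apply: Rmult_le_compat_r => //; apply: Rlt_le; apply: Rinv_0_lt_compat => //.
case: (Rlt_le_dec 0 Lg) => HLg0.
  exists (atan (Lf / Lg)); apply: continuity_seq; first exact: cont_atan.
  have := CV_mult _ _ _ _ HLf (cv_inv _ _ (Rgt_not_eq _ _ HLg0) HLg).
  apply: Un_cv_tail => N HN; have := Hpd N HN; have := Hg N HN => *.
  field; lra.
have HLf0 : 0 < Lf by lra.
exists (PI / 2 - atan (Lg / Lf)).
have H2 : Un_cv (fun N => atan (sumL gs N / sumL fs N)) (atan (Lg / Lf)).
  apply: continuity_seq; first exact: cont_atan.
  have := CV_mult _ _ _ _ HLg (cv_inv _ _ (Rgt_not_eq _ _ HLf0) HLf).
  apply: Un_cv_tail => N HN; have := Hpd N HN; have := Hf N HN => *.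
  field; lra.
have := CV_minus _ _ _ _ (Un_cv_const (PI / 2)) H2.
apply: Un_cv_tail => N HN; have := Hg N HN; have := Hf N HN => *.
rewrite -atan_inv; last by apply: Rdiv_lt_0_compat.
congr atan; field; lra.
Qed.

End Analysis.

Lemma Rplus_assoc' : associative Rplus.
Proof. move=> *; by rewrite Rplus_assoc. Qed.
Lemma Rmult_assoc' : associative Rmult.
Proof. move=> *; by rewrite Rmult_assoc. Qed.
HB.instance Definition _ := Monoid.isComLaw.Build R 0%R Rplus Rplus_assoc' Rplus_comm Rplus_0_l.
HB.instance Definition _ := Monoid.isComLaw.Build R 1%R Rmult Rmult_assoc' Rmult_comm Rmult_1_l.
HB.instance Definition _ := Monoid.isMulLaw.Build R 0%R Rmult Rmult_0_l Rmult_0_r.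
HB.instance Definition _ := Monoid.isAddLaw.Build R Rmult Rplus Rmult_plus_distr_r Rmult_plus_distr_l.

Set Implicit Arguments.
Unset Strict Implicit.
Section Poly.
Local Open Scope R_scope.
Variable E : finType.
Variable Rn : nat -> E -> E -> R.
Hypothesis HA : assumptionA Rn.

Definition Pd d (f : nat -> R) := exists ks : seq (exps Rn d),
  forall N, (1 <= N)%nat -> f N = sumL [seq rate_monomial k | k <- ks] N.

Lemma exps0 (k : exps Rn 0) p : p.1 != p.2 -> proj1_sig k p.1 p.2 = 0%nat.
Proof.
case: k => kf [_ Hs] /= Hp.
move: Hs; rewrite (bigD1 p) //= => /eqP; rewrite addn_eq0 => /andP [/eqP -> _] //.
Qed.

Lemma rm0 (k : exps Rn 0) N : rate_monomial k N = 1.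
Proof.
rewrite /rate_monomial big1 // => p Hp; rewrite exps0 //.
Qed.

Lemma mono_pos d (k : exps Rn d) N : (1 <= N)%nat -> 0 < rate_monomial k N.
Proof.
case: d k => [|d] k HN; first by rewrite rm0; lra.
by have [Hp _] := (proj2 HA) d.+1 (ltn0Sn _); apply: Hp.
Qed.

Lemma mono_dom d (k1 k2 : exps Rn d) :
  dom (rate_monomial k1) (rate_monomial k2) \/ dom (rate_monomial k2) (rate_monomial k1).
Proof.
have Hp (k : exps Rn d) : posq (rate_monomial k) .
  by move=> N HN; apply: mono_pos.
case: (classic (k1 = k2)) => [->|Hne]; first by left; apply: dom_refl.
case: d k1 k2 Hne Hp => [|d] k1 k2 Hne Hp.
  left; exists 1; have := Un_cv_const 1; apply: Un_cv_tail => N _.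
  rewrite !rm0 /Rdiv Rinv_1 Rmult_1_l //.
apply: ordered_dom => //.
by have [_ Ho] := (proj2 HA) d.+1 (ltn0Sn _); apply: Ho.
Qed.

Lemma Pd_ext d f g : (forall N, (1 <= N)%nat -> f N = g N) -> Pd d f -> Pd d g.
Proof. move=> H [ks Hk]; exists ks => N HN; rewrite -H //; exact: Hk. Qed.

Lemma Pd_0 d : Pd d (fun _ => 0).
Proof. by exists [::]. Qed.

Lemma Pd_add d f g : Pd d f -> Pd d g -> Pd d (fun N => f N + g N).
Proof.
move=> [ks1 H1] [ks2 H2]; exists (ks1 ++ ks2) => N HN.
by rewrite map_cat sumL_cat H1 // H2.
Qed.

Lemma Pd_ge0 d f N : Pd d f -> (1 <= N)%nat -> 0 <= f N.
Proof.
move=> [ks H] HN; rewrite H //; elim: ks {H} => [|k ks IH] /=; first lra.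
have := mono_pos k HN; lra.
Qed.

Lemma Pd_big d (I : Type) (r : seq I) (P : pred I) (F : I -> nat -> R) :
  (forall i, P i -> Pd d (F i)) ->
  Pd d (fun N => \big[Rplus/0]_(i <- r | P i) F i N).
Proof.
move=> H; elim: r => [|i r IH].
  by apply: Pd_ext (Pd_0 d) => N _; rewrite big_nil.
case Hi: (P i).
  apply: Pd_ext (Pd_add (H i Hi) IH) => N _; by rewrite big_cons Hi.
by apply: Pd_ext IH => N _; rewrite big_cons Hi.
Qed.

Lemma mulk_proof d e (k1 : exps Rn d) (k2 : exps Rn e) :
  (forall x y, (proj1_sig k1 x y + proj1_sig k2 x y)%nat <> 0%nat -> inB Rn x y) /\
  \big[addn/0%nat]_(p : E * E | p.1 != p.2) (proj1_sig k1 p.1 p.2 + proj1_sig k2 p.1 p.2)%nat = (d + e)%nat.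
Proof.
case: k1 k2 => [k1 [H1 S1]] [k2 [H2 S2]] /=; split.
  move=> x y Hs; case: (eqVneq (k1 x y) 0%nat) => Hk.
    by apply: H2 => Hk2; apply: Hs; rewrite Hk Hk2.
  by apply: H1; apply/eqP.
by rewrite big_split /= S1 S2.
Qed.

Definition mulk d e (k1 : exps Rn d) (k2 : exps Rn e) : exps Rn (d + e) :=
  exist _ (fun x y => (proj1_sig k1 x y + proj1_sig k2 x y)%nat) (mulk_proof k1 k2).

Lemma rm_mul d e (k1 : exps Rn d) (k2 : exps Rn e) N :
  rate_monomial (mulk k1 k2) N = rate_monomial k1 N * rate_monomial k2 N.
Proof.
rewrite /rate_monomial /= -big_split /=; apply: eq_bigr => p _; exact: pow_add.
Qed.

Lemma Pd_mul d e f g : Pd d f -> Pd e g -> Pd (d + e) (fun N => f N * g N).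
Proof.
move=> [ks1 H1] Hg; apply: (@Pd_ext _ (fun N => sumL [seq rate_monomial k | k <- ks1] N * g N)).
  by move=> N HN; rewrite H1.
elim: ks1 {H1} => [|k ks IH] /=.
  by apply: Pd_ext (Pd_0 _) => N _; rewrite Rmult_0_l.
apply: Pd_ext (Pd_add _ IH); first by move=> N _; rewrite Rmult_plus_distr_r.
case: Hg => ks2 H2; exists [seq mulk k k2 | k2 <- ks2] => N HN; rewrite H2 //.
elim: ks2 {H2} => [|k2 ks2 IH2] /=; first lra.
by rewrite -IH2 rm_mul; ring.
Qed.

Lemma In_map_rm d (ks : seq (exps Rn d)) f :
  List.In f [seq rate_monomial k | k <- ks] -> exists k : exps Rn d, f = rate_monomial k.
Proof.
elim: ks => [|k ks IH] //= [<-|H]; first by exists k.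
exact: IH.
Qed.

Lemma rm_unit_proof x y (H : inB Rn x y) :
  (forall a b, (if (a == x) && (b == y) then 1 else 0)%nat <> 0%nat -> inB Rn a b) /\
  \big[addn/0%nat]_(p : E * E | p.1 != p.2) (if (p.1 == x) && (p.2 == y) then 1 else 0)%nat = 1%nat.
Proof.
split.
  by move=> a b; case: (a =P x) => [->|_] //; case: (b =P y) => [->|_].
have Hxy : (x, y).1 != (x, y).2 by apply/eqP; case: H.
rewrite (bigD1 (x, y)) //= !eqxx /= big1 // => -[a b] /andP [_ Hne] /=.
case: (a =P x) Hne => [->|_] //; case: (b =P y) => [->|_] //; by rewrite eqxx.
Qed.

Definition unitk x y (H : inB Rn x y) : exps Rn 1 :=
  exist _ (fun a b => if (a == x) && (b == y) then 1%nat else 0%nat) (rm_unit_proof H).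

Lemma Pd_rate x y : x <> y -> Pd 1 (fun N => Rn N x y).
Proof.
move=> Hxy; case: (Rlt_le_dec 0 (Rn 1%nat x y)) => Hp.
  have HB : inB Rn x y by [].
  exists [:: unitk HB] => N HN /=; rewrite Rplus_0_r /rate_monomial /=.
  have Hxy' : (x, y).1 != (x, y).2 by apply/eqP.
  rewrite (bigD1 (x, y)) //= !eqxx /= big1 ?pow_1 ?Rmult_1_r // => -[a b] /andP [_ Hne] /=.
  case: (a =P x) Hne => [->|_] //; case: (b =P y) => [->|_] //; by rewrite eqxx.
case: ((proj1 HA) x y Hxy) => Hz.
  by apply: Pd_ext (Pd_0 _) => N HN; rewrite Hz.
by have := Hz 1%nat (leqnn _); lra.
Qed.

End Poly.

Set Implicit Arguments.
Unset Strict Implicit.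

Inductive reachS (E : finType) (S : {set E}) (Q : E -> E -> R) : E -> E -> Prop :=
  | rS_refl x : reachS S Q x x
  | rS_step x y z : x <> y -> y \in S -> (0 < Q x y)%R -> reachS S Q y z -> reachS S Q x z.

Section Main.
Local Open Scope R_scope.
Variable E : finType.
Variable Rn : nat -> E -> E -> R.
Hypothesis HA : assumptionA Rn.

Lemma sum_ge0 (I : Type) (r : seq I) (P : pred I) (F : I -> R) :
  (forall i, P i -> 0 <= F i) -> 0 <= \big[Rplus/0]_(i <- r | P i) F i.
Proof. move=> H; apply: big_ind => //; [lra | move=> *; lra]. Qed.

Lemma sum_gt0 (I : finType) (P : pred I) (F : I -> R) j :
  (forall i, P i -> 0 <= F i) -> P j -> 0 < F j -> 0 < \big[Rplus/0]_(i | P i) F i.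
Proof.
move=> H Pj Fj; rewrite (bigD1 j) //=.
have : 0 <= \big[Rplus/0]_(i | P i && (i != j)) F i.
  by apply: sum_ge0 => i /andP [Pi _]; apply: H.
lra.
Qed.

Lemma last_edge (S : {set E}) q x y : reachS S q x y -> x <> y -> x \in S ->
  exists eta, eta \in S /\ eta <> y /\ 0 < q eta y.
Proof.
elim=> [a|a b c Hab Hb Hq Hr IH] // Hac Ha.
case: (eqVneq b c) => [Ebc|Nbc]; first by subst c; exists a.
by apply: IH => //; apply/eqP.
Qed.

Lemma first_edge (S : {set E}) q x y : reachS S q x y -> x <> y ->
  exists w, w \in S /\ x <> w /\ 0 < q x w.
Proof. by case=> [a|a b c Hab Hb Hq Hr] // _; exists b. Qed.

Lemma card_le1_eq (S : {set E}) x y : (#|S| <= 1)%nat -> x \in S -> y \in S -> x = y.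
Proof. by move/card_le1_eqP => H Hx Hy; apply: H. Qed.

Definition Hbal (S : {set E}) (Q : nat -> E -> E -> R) (nu : nat -> E -> R) :=
  forall N, (1 <= N)%nat -> forall xi, xi \in S ->
    \big[Rplus/0]_(eta in S | eta != xi) (nu N eta * Q N eta xi) =
    nu N xi * \big[Rplus/0]_(zeta in S | zeta != xi) Q N xi zeta.

Definition concl (S : {set E}) (nu : nat -> E -> R) :=
  exists D (P : E -> nat -> R),
   (forall x, x \in S -> Pd Rn D (P x)) /\
   (forall x N, x \in S -> (1 <= N)%nat -> 0 < P x N) /\
   (forall x y N, x \in S -> y \in S -> (1 <= N)%nat -> nu N x * P y N = nu N y * P x N).


Lemma reach_elim (S : {set E}) z (q : E -> E -> R) t : z \in S -> 0 < t ->
  (forall x y, x \in S -> y \in S -> x <> y -> 0 <= q x y) ->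
  forall x y, reachS S q x y -> x \in S -> y \in S :\ z ->
  (x != z -> reachS (S :\ z) (fun a b => q a b * t + q a z * q z b) x y) /\
  (x = z -> forall u, u \in S :\ z -> 0 < q u z ->
     reachS (S :\ z) (fun a b => q a b * t + q a z * q z b) u y).
Proof.
move=> Hz Ht Hnn x y; elim=> [a|a b c Hab Hb Hq Hr IH] Ha Hc.
  split; first by move=> _; apply: rS_refl.
  by move=> Eaz; move: Hc; rewrite in_setD1 Eaz eqxx.
have [IH1 IH2] := IH Hb Hc.
split.
  move=> Naz; case: (eqVneq b z) => [Ebz|Nbz].
    subst b; apply: IH2 => //; by rewrite in_setD1 Naz Ha.
  apply: (rS_step (y := b)) => //; first by rewrite in_setD1 Nbz Hb.
    have Naz' : a <> z by apply/eqP.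
    have Nzb : z <> b by apply/eqP; rewrite eq_sym.
    have := Hnn a z Ha Hz Naz'; have := Hnn z b Hz Hb Nzb.
    move=> H1 H2; have := Rmult_le_pos _ _ H2 H1; have := Rmult_lt_0_compat _ _ Hq Ht; lra.
  exact: IH1.
move=> Eaz u Hu Hquz; subst a.
have Nbz : b != z by apply/eqP => E'; apply: Hab; rewrite E'.
have Rb := IH1 Nbz.
case: (eqVneq u b) => [->|Nub] //.
have HuS : u \in S by move: Hu; rewrite in_setD1 => /andP [].
have Nub' : u <> b by apply/eqP.
apply: (rS_step (y := b)) => //; first by rewrite in_setD1 Nbz Hb.
  have := Hnn u b HuS Hb Nub' => H1.
  have := Rmult_le_pos _ _ H1 (Rlt_le _ _ Ht); have := Rmult_lt_0_compat _ _ Hquz Hq; lra.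
Qed.

Lemma bal_elim (S : {set E}) z (q : E -> E -> R) (v : E -> R) : z \in S ->
  (forall xi, xi \in S -> \big[Rplus/0]_(eta in S | eta != xi) (v eta * q eta xi) =
      v xi * \big[Rplus/0]_(zeta in S | zeta != xi) q xi zeta) ->
  forall xi, xi \in S :\ z ->
  let t := \big[Rplus/0]_(w in S | w != z) q z w in
  \big[Rplus/0]_(eta in S :\ z | eta != xi) (v eta * (q eta xi * t + q eta z * q z xi)) =
  v xi * \big[Rplus/0]_(zeta in S :\ z | zeta != xi) (q xi zeta * t + q xi z * q z zeta).
Proof.
move=> Hz Hb xi Hxi t.
have [Nxz HxS] : xi != z /\ xi \in S by move: Hxi; rewrite in_setD1 => /andP [].
have split1 F : \big[Rplus/0]_(eta in S | eta != xi) F eta =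
    F z + \big[Rplus/0]_(eta in S :\ z | eta != xi) F eta.
  rewrite (bigD1 z) /=; last by rewrite Hz eq_sym Nxz.
  congr Rplus; apply: eq_bigl => e; rewrite in_setD1.
  by case: (e \in S); case: (e != z); case: (e != xi).
have split2 F : \big[Rplus/0]_(w in S | w != z) F w =
    F xi + \big[Rplus/0]_(w in S :\ z | w != xi) F w.
  rewrite (eq_bigl (fun w => w \in S :\ z)); last by move=> w; rewrite in_setD1 andbC.
  by rewrite (bigD1 xi).
have Bx := Hb xi HxS; rewrite split1 split1 in Bx.
have Bz := Hb z Hz; rewrite split2 in Bz.
have Et : t = q z xi + \big[Rplus/0]_(w in S :\ z | w != xi) q z w by rewrite /t split2.
rewrite (eq_bigr (fun eta => v eta * q eta xi * t + v eta * q eta z * q z xi)); last by move=> *; ring.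
rewrite big_split /= -!big_distrl /=.
rewrite big_split /= -big_distrl -big_distrr /=.
move: Bx Bz Et; rewrite -/t.
set A1 := \big[Rplus/0]_(i in S :\ z | i != xi) (v i * q i xi).
set A2 := \big[Rplus/0]_(i in S :\ z | i != xi) (v i * q i z).
set O' := \big[Rplus/0]_(i in S :\ z | i != xi) q xi i.
set T' := \big[Rplus/0]_(i in S :\ z | i != xi) q z i.
clearbody t A1 A2 O' T' => Bx Bz Et.
have eA1 : A1 = v xi * (q xi z + O') - v z * q z xi by lra.
have eA2 : A2 = v z * t - v xi * q xi z by lra.
rewrite eA1 eA2 Et; ring.
Qed.

Lemma k0_proof : (forall x y : E, (0%nat : nat) <> 0%nat -> inB Rn x y) /\
  \big[addn/0%nat]_(p : E * E | p.1 != p.2) 0%nat = 0%nat.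
Proof. by split => //; rewrite big1. Qed.

Definition k0 : exps Rn 0 := exist _ (fun _ _ => 0%nat) k0_proof.

Lemma base_case (S : {set E}) nu : (#|S| <= 1)%nat -> concl S nu.
Proof.
move=> HS; exists 0%nat, (fun _ _ => 1); split; [|split].
- by move=> x _; exists [:: k0] => N _ /=; rewrite rm0 Rplus_0_r.
- by move=> *; lra.
- by move=> x y N Hx Hy _; rewrite (card_le1_eq HS Hx Hy).
Qed.

Lemma main_ind n : forall (S : {set E}), #|S| = n -> forall d (Q : nat -> E -> E -> R) nu,
  (forall x y, x \in S -> y \in S -> x <> y -> Pd Rn d (fun N => Q N x y)) ->
  (forall N, (1 <= N)%nat -> forall x y, x \in S -> y \in S -> reachS S (Q N) x y) ->
  Hbal S Q nu -> concl S nu.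
Proof.
elim: n => [|n IH] S HS d Q nu HQ Hr Hb; first by apply: base_case; rewrite HS.
case: (leqP #|S| 1) => [Hle|Hgt]; first exact: base_case.
have [z Hz] : exists z, z \in S by apply/card_gt0P; apply: ltn_trans Hgt.
have HS' : #|S :\ z| = n by move: HS; rewrite (cardsD1 z) Hz => -[].
have [y0 Hy0] : exists y0, y0 \in S :\ z.
  by apply/card_gt0P; rewrite HS'; move: Hgt; rewrite HS.
have [Ny0z Hy0S] : y0 != z /\ y0 \in S by move: Hy0; rewrite in_setD1 => /andP [].
have Hnn N : (1 <= N)%nat -> forall x y, x \in S -> y \in S -> x <> y -> 0 <= Q N x y.
  by move=> HN x y Hx Hy Hxy; exact: Pd_ge0 (HQ x y Hx Hy Hxy) HN.
pose T N := \big[Rplus/0]_(w in S | w != z) Q N z w.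
have HT N : (1 <= N)%nat -> 0 < T N.
  move=> HN; have Nzy : z <> y0 by move=> E'; move: Ny0z; rewrite E' eqxx.
  have [w [Hw [Hzw Hq]]] := first_edge (Hr N HN z y0 Hz Hy0S) Nzy.
  apply: (@sum_gt0 _ _ _ w) => //.
    by move=> i /andP [Hi Niz]; apply: Hnn => //; apply/eqP; rewrite eq_sym.
  by rewrite Hw; apply/eqP => E'; apply: Hzw.
have HTd : Pd Rn d T.
  by apply: Pd_big => i /andP [Hi Niz]; apply: (HQ) => //; apply/eqP; rewrite eq_sym.
pose Q' N x y := Q N x y * T N + Q N x z * Q N z y.
have HQ' : forall x y, x \in S :\ z -> y \in S :\ z -> x <> y -> Pd Rn (d + d) (fun N => Q' N x y).
  move=> x y; rewrite !in_setD1 => /andP [Nxz Hx] /andP [Nyz Hy] Nxy.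
  have Nxz' : x <> z by apply/eqP.
  have Nzy' : z <> y by apply/eqP; rewrite eq_sym.
  apply: (Pd_add (f := fun N => Q N x y * T N) (g := fun N => Q N x z * Q N z y)).
    exact: Pd_mul (HQ x y Hx Hy Nxy) HTd.
  exact: Pd_mul (HQ x z Hx Hz Nxz') (HQ z y Hz Hy Nzy').
have Hr' : forall N, (1 <= N)%nat -> forall x y, x \in S :\ z -> y \in S :\ z -> reachS (S :\ z) (Q' N) x y.
  move=> N HN x y Hx Hy.
  have [HxS Nxz] : x \in S /\ x != z by move: Hx; rewrite in_setD1 => /andP [].
  have HyS : y \in S by move: Hy; rewrite in_setD1 => /andP [].
  exact: (proj1 (reach_elim Hz (HT N HN) (Hnn N HN) (Hr N HN x y HxS HyS) HxS Hy) Nxz).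
have Hb' : Hbal (S :\ z) Q' nu.
  move=> N HN xi Hxi; exact: (bal_elim Hz (Hb N HN) Hxi).
have [D [P' [HP1 [HP2 HP3]]]] := IH _ HS' _ _ nu HQ' Hr' Hb'.
have inS' e : e \in S :\ z -> e \in S /\ e <> z.
  by rewrite in_setD1 => /andP [Nez He]; split => //; apply/eqP.
pose P x N := if x == z then \big[Rplus/0]_(eta in S :\ z) (P' eta N * Q N eta z) else P' x N * T N.
have Ez N : (1 <= N)%nat -> nu N z * T N = \big[Rplus/0]_(eta in S :\ z) (nu N eta * Q N eta z).
  move=> HN; rewrite -(Hb N HN z Hz); apply: eq_bigl => e; rewrite in_setD1 andbC //.
have Hzy N y : (1 <= N)%nat -> y \in S :\ z -> nu N z * P y N = nu N y * P z N.
  move=> HN Hy; have [HyS Nyz] := inS' y Hy.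
  rewrite /P eqxx; case: eqP => // _.
  transitivity (P' y N * (nu N z * T N)); first ring.
  rewrite (Ez N HN) !big_distrr /=; apply: eq_bigr => eta Heta.
  have := HP3 eta y N Heta Hy HN => H.
  transitivity ((nu N eta * P' y N) * Q N eta z); first ring.
  rewrite H; ring.
exists (D + d)%nat, P; split; [|split].
- move=> x Hx; rewrite /P; case: (eqVneq x z) => [Exz|Nxz]; first subst x.
    rewrite ?eqxx; apply: Pd_big => eta Heta; have [HeS Nez] := inS' eta Heta.
    exact: Pd_mul (HP1 eta Heta) (HQ eta z HeS Hz Nez).
  rewrite ?(negbTE Nxz); apply: Pd_mul (HP1 x _) HTd; by rewrite in_setD1 Nxz Hx.
- move=> x N Hx HN; rewrite /P; case: (eqVneq x z) => [Exz|Nxz]; first subst x.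
    have Ny0z' : y0 <> z by apply/eqP.
    have [eta [HeS [Nez Hq]]] := last_edge (Hr N HN y0 z Hy0S Hz) Ny0z' Hy0S.
    have HeS' : eta \in S :\ z by rewrite in_setD1 HeS andbT; apply/eqP.
    apply: (@sum_gt0 _ _ _ eta) => //.
      move=> i Hi; have [HiS Niz] := inS' i Hi.
      by apply: Rmult_le_pos; [apply: Rlt_le; apply: HP2 | apply: Hnn].
    by apply: Rmult_lt_0_compat => //; apply: HP2.
  have Hx' : x \in S :\ z by rewrite in_setD1 Nxz Hx.
  by apply: Rmult_lt_0_compat; [apply: HP2 | apply: HT].
- move=> x y N Hx Hy HN.
  case: (eqVneq x z) => [->|Nxz]; case: (eqVneq y z) => [->|Nyz] //.
  + by apply: Hzy => //; rewrite in_setD1 Nyz Hy.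
  + by symmetry; apply: Hzy => //; rewrite in_setD1 Nxz Hx.
  + have Hx' : x \in S :\ z by rewrite in_setD1 Nxz Hx.
    have Hy' : y \in S :\ z by rewrite in_setD1 Nyz Hy.
    rewrite /P (negbTE Nxz) (negbTE Nyz).
    have := HP3 x y N Hx' Hy' HN => H.
    transitivity ((nu N x * P' y N) * T N); first ring.
    rewrite H; ring.
Qed.

End Main.

Unset Implicit Arguments.
Set Strict Implicit.

Theorem lemma3p2 (E : finType) (Rn : nat -> E -> E -> R) (mu : nat -> E -> R) :
  (forall N x y, (1 <= N)%nat -> x <> y -> (0 <= Rn N x y)%R) ->
  (forall N, (1 <= N)%nat -> irreducible (Rn N)) ->
  (forall N, (1 <= N)%nat -> invariant_prob (Rn N) (mu N)) ->
  assumptionA Rn ->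
  ordered_family (fun (x : E) (N : nat) => mu N x).
Proof.
move=> Hnn Hirr Hinv HA.
have Hrates : forall x y, x \in [set: E] -> y \in [set: E] -> x <> y -> Pd Rn 1 (fun N => Rn N x y).
  by move=> x y _ _ Hxy; exact: (Pd_rate HA Hxy).
have Hreach : forall N, (1 <= N)%nat -> forall x y, x \in [set: E] -> y \in [set: E] -> reachS [set: E] (Rn N) x y.
  move=> N HN x y _ _; elim: (Hirr N HN x y) => [a|a b c Hab Hq Hr IH]; first exact: rS_refl.
  by apply: rS_step IH; rewrite ?in_setT.
have Hbal' : Hbal [set: E] Rn mu.
  move=> N HN xi _; have [_ [_ H]] := Hinv N HN.
  have E1 (F : E -> R) : \big[Rplus/0%R]_(e in [set: E] | e != xi) F e = \big[Rplus/0%R]_(e | e != xi) F e.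
    by apply: eq_bigl => e; rewrite in_setT.
  by rewrite !E1; apply: H.
have [D [P [HP1 [HP2 HP3]]]] := main_ind HA (erefl #|[set: E]|) Hrates Hreach Hbal'.
pose SP N := \big[Rplus/0%R]_(y : E) P y N.
have HSP N : (1 <= N)%nat -> (0 < SP N)%R.
  move=> HN; have [x _] : exists x : E, true.
    have [_ [Hs _]] := Hinv N HN.
    case: (pickP (fun _ : E => true)) => [x _|H0]; first by exists x.
    by move: Hs; rewrite big_pred0 // => H1; exfalso; lra.
  apply: (@sum_gt0 _ _ _ x) => //; [move=> i _; apply: Rlt_le; apply: HP2; by rewrite ?in_setT | by apply: HP2; rewrite ?in_setT].
have Hmu N x : (1 <= N)%nat -> mu N x = (P x N / SP N)%R.
  move=> HN; have [_ [Hs _]] := Hinv N HN.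
  have HS := HSP N HN.
  have : (P x N = mu N x * SP N)%R.
    transitivity (P x N * \big[Rplus/0%R]_(y : E) mu N y)%R; first by rewrite Hs Rmult_1_r.
    rewrite /SP !big_distrr /=; apply: eq_bigr => y _.
    rewrite Rmult_comm HP3 ?in_setT //.
  move=> ->; field; lra.
split.
  move=> x N HN /=; rewrite Hmu //; apply: Rdiv_lt_0_compat; [apply: HP2; by rewrite ?in_setT | exact: HSP].
move=> r s Hrs /=.
have [ksr Hr] := HP1 r (in_setT r).
have [kss Hs] := HP1 s (in_setT s).
have Hin f : List.In f ([seq rate_monomial k | k <- ksr] ++ [seq rate_monomial k | k <- kss]) ->
    exists k : exps Rn D, f = rate_monomial k.
  by move=> Hf; case: (List.in_app_or _ _ _ Hf); apply: In_map_rm.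
have H1 : forall f, List.In f ([seq rate_monomial k | k <- ksr] ++ [seq rate_monomial k | k <- kss]) -> posq f.
  move=> f /Hin [k ->] N HN. exact: (mono_pos HA k HN).
have H2 : forall f g, List.In f ([seq rate_monomial k | k <- ksr] ++ [seq rate_monomial k | k <- kss]) ->
   List.In g ([seq rate_monomial k | k <- ksr] ++ [seq rate_monomial k | k <- kss]) -> dom f g \/ dom g f.
  by move=> f g /Hin [k1 ->] /Hin [k2 ->]; apply: mono_dom.
have H3 : posq (sumL [seq rate_monomial k | k <- ksr]).
  by move=> N HN; rewrite -Hr //; exact: HP2 (in_setT r) HN.
have H4 : posq (sumL [seq rate_monomial k | k <- kss]).
  by move=> N HN; rewrite -Hs //; exact: HP2 (in_setT s) HN.
have [l Hl] := ratio_atan _ _ H1 H2 H3 H4.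
exists l; apply: Un_cv_tail Hl => N HN.
rewrite -Hr // -Hs // !Hmu //; congr atan.
have := HSP N HN; have := HP2 s N (in_setT s) HN => *; field; lra.
Qed.
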